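(* Let $\mathcal{G}_n$ be the set of binary words $w=w_1\cdots w_{2n}$ with $n$ zeros and $n$ ones, and $\mathrm{da}(w)=|\{i\in[n]: w_i\neq w_{2n+1-i}\}|$. For integers $0\le k\le n$ with $n-k$ even, $$|\{w\in\mathcal{G}_n:\mathrm{da}(w)=k\}|=\binom{n}{k}\binom{n-k}{\frac{n-k}{2}}2^k,$$ and this number is $0$ if $n-k$ is odd.
   Context: $[n]=\{1,2,\dots,n\}$. *)

(* Defs.v *)
From mathcomp Require Import all_boot.
Set Implicit Arguments. Unset Strict Implicit. Unset Printing Implicit Defensive.

(* Binary words of length 2n are (n.*2).-tuples of bool; positions are
   0-based: position j (0 <= j < 2n) corresponds to w_{j+1}. *)

Definition balanced (n : nat) (w : (n.*2).-tuple bool) : bool :=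
  (count (fun b => b == false) w == n) && (count (fun b => b == true) w == n).

(* da(w) = #{ i in [n] : w_i != w_{2n+1-i} }; with 0-based j = i-1 this is
   #{ j < n : nth j != nth (2n-1-j) }. *)
Definition da (n : nat) (w : (n.*2).-tuple bool) : nat :=
  #|[set j : 'I_n | nth false w j != nth false w (n.*2 - 1 - j)]|.

(* Main.v *)
Require Import Defs.
From mathcomp Require Import all_boot zify.
From Stdlib Require Import Lia.
Set Implicit Arguments. Unset Strict Implicit. Unset Printing Implicit Defensive.

Section S.
Variable n : nat.

Definition memn (G : {set 'I_n}) (j : nat) : bool :=
  [exists x : 'I_n, (x \in G) && (val x == j)].

Lemma memnE G (x : 'I_n) : memn G x = (x \in G).
Proof.
apply/existsP/idP => [[y /andP[Hy /eqP/val_inj E]]|Hx]; first by rewrite -E.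
by exists x; rewrite Hx eqxx.
Qed.

Definition psi (w : (n.*2).-tuple bool) : {set 'I_n} * {set 'I_n} :=
  ([set j : 'I_n | nth false w j],
   [set j : 'I_n | nth false w j != nth false w (n.*2 - 1 - j)]).

Definition phif (p : {set 'I_n} * {set 'I_n}) (j : nat) : bool :=
  if j < n then memn p.1 j
  else memn p.1 (n.*2 - 1 - j) (+) memn p.2 (n.*2 - 1 - j).

Definition phi p : (n.*2).-tuple bool := [tuple phif p (val i) | i < n.*2].

Lemma nth_phi p j : j < n.*2 -> nth false (phi p) j = phif p j.
Proof. by move=> Hj; rewrite -[j]/(val (Ordinal Hj)) nth_mktuple. Qed.

Lemma psiK : cancel psi phi.
Proof.
move=> w; apply: val_inj; apply: (eq_from_nth (x0 := false)).
  by rewrite !size_tuple.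
move=> j; rewrite size_tuple => Hj; rewrite nth_phi // /phif.
case: ifP => Hjn.
  by rewrite -[j]/(val (Ordinal Hjn)) memnE inE.
have Hi : n.*2 - 1 - j < n by rewrite -addnn in Hj *; lia.
rewrite -[n.*2 - 1 - j]/(val (Ordinal Hi)) !memnE !inE /=.
have -> : n.*2 - 1 - (n.*2 - 1 - j) = j by rewrite -addnn in Hj *; lia.
by case: (nth false w _); case: (nth false w j).
Qed.

Lemma phiK : cancel phi psi.
Proof.
move=> [G D]; rewrite /psi; congr pair; apply/setP => x; rewrite inE.
  by rewrite nth_phi ?/phif ?ltn_ord ?memnE // -addnn; have := ltn_ord x; lia.
have Hx := ltn_ord x.
rewrite !nth_phi ?/phif ?Hx ?memnE; try (rewrite -addnn; lia).
have -> : (n.*2 - 1 - x < n) = false by rewrite -addnn; lia.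
have -> : n.*2 - 1 - (n.*2 - 1 - x) = x by rewrite -addnn; lia.
by rewrite !memnE /=; case: (x \in G); case: (x \in D).
Qed.

End S.
Section S.
Variable n : nat.

Lemma sum_ind (A : {set 'I_n}) : \sum_(j < n) (j \in A : nat) = #|A|.
Proof.
rewrite -sum1_card [RHS]big_mkcond /=; apply: eq_bigr => j _; by case: (j \in A).
Qed.

Lemma count_true (w : (n.*2).-tuple bool) :
  count (fun b => b == true) w =
  \sum_(j < n) ((nth false w j : nat) + nth false w (n.*2 - 1 - j)).
Proof.
rewrite -sum1_count big_mkcond big_tuple.
set F := fun j : nat => (nth false w j : nat).
have -> : \sum_(i < n.*2) (if tnth w i == true then 1 else 0) = \sum_(i < n.*2) F i.
  by apply: eq_bigr => i _; rewrite (tnth_nth false) /F; case: (nth _ _ _).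
rewrite -(big_mkord xpredT F).
rewrite (_ : \sum_(0 <= i < n.*2) F i = \sum_(0 <= i < n + n) F i); last by rewrite addnn.
rewrite (big_cat_nat _ (n := n)) ?leq_addr //=.
rewrite (big_addn 0 (n + n) n) addnK big_mkord big_mkord big_split /=.
congr addn; rewrite (reindex_inj rev_ord_inj) /=; apply: eq_bigr => i _.
rewrite /F; congr (nat_of_bool (nth _ _ _)); have := ltn_ord i; lia.
Qed.

Lemma balancedE (w : (n.*2).-tuple bool) :
  balanced w = (#|(psi w).2| + 2 * #|(psi w).1 :\: (psi w).2| == n).
Proof.
have Hs := count_predC (fun b => b == true) w.
rewrite size_tuple in Hs.
rewrite /balanced.
have -> : count (fun b => b == false) w = count (predC (fun b => b == true)) w.
  by apply: eq_count => b; case: b.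
rewrite count_true in Hs *.
have Esum : \sum_(j < n) ((nth false w j : nat) + nth false w (n.*2 - 1 - j)) =
  \sum_(i < n) ((i \in (psi w).2 : nat) + 2 * (i \in (psi w).1 :\: (psi w).2)).
  by apply: eq_bigr => i _; rewrite !inE; case: (nth false w i); case: (nth false w _).
rewrite Esum big_split /= -big_distrr /= !sum_ind in Hs *.
set s := _ + _.
apply/andP/eqP => [[_ /eqP //]|E]; split; apply/eqP => //; have := addnn n; lia.
Qed.

Lemma daE (w : (n.*2).-tuple bool) : da w = #|(psi w).2|.
Proof. by []. Qed.

End S.
Section S.
Variable n : nat.

Lemma splitcount (D : {set 'I_n}) a :
  #|[set G : {set 'I_n} | #|G :\: D| == a]| = 2 ^ #|D| * 'C(#|~: D|, a).
Proof.
rewrite -card_powerset -cards_draws -cardsX.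
pose f (G : {set 'I_n}) := (G :&: D, G :\: D).
have finj : injective f.
  move=> G1 G2 [E1 E2]; by rewrite -(setID G1 D) -(setID G2 D) E1 E2.
rewrite -(card_imset _ finj); apply: eq_card => -[A B].
apply/imsetP/idP.
  move=> [G HG [-> ->]]; rewrite in_setX powersetE subsetIr /= inE.
  by rewrite inE in HG; rewrite HG andbT setDE subsetIr.
move=> /setXP[]; rewrite powersetE inE => HA /andP[HB /eqP HBa].
have hx (x : 'I_n) : ((x \in B) ==> (x \notin D)) && ((x \in A) ==> (x \in D)).
  by apply/andP; split; apply/implyP => h; [move: (subsetP HB x h); rewrite inE|exact: (subsetP HA x h)].
exists (A :|: B).
  rewrite inE; suff -> : (A :|: B) :\: D = B by rewrite HBa.
  apply/setP => x; move: (hx x); rewrite !inE.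
  by case: (x \in A); case: (x \in B); case: (x \in D).
rewrite /f; congr pair; apply/setP => x; move: (hx x); rewrite !inE.
  by case: (x \in A); case: (x \in B); case: (x \in D).
by case: (x \in A); case: (x \in B); case: (x \in D).
Qed.

Lemma sum_indT (T : finType) (A : {set T}) : \sum_(x : T) (x \in A : nat) = #|A|.
Proof.
rewrite -sum1_card [RHS]big_mkcond /=; apply: eq_bigr => j _; by case: (j \in A).
Qed.

Lemma countPairs k : k <= n ->
  #|[set p : {set 'I_n} * {set 'I_n} | (#|p.2| + 2 * #|p.1 :\: p.2| == n) && (#|p.2| == k)]|
  = if odd (n - k) then 0 else 'C(n, k) * 'C(n - k, (n - k)./2) * 2 ^ k.
Proof.
move=> Hk.
rewrite -sum_indT.
pose F := fun G D : {set 'I_n} => ((#|D| + 2 * #|G :\: D| == n) && (#|D| == k) : nat).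
rewrite (eq_bigr (fun p => F p.1 p.2)); last by move=> p _; rewrite inE.
rewrite -(pair_bigA _ F) /= exchange_big /= /F. 
rewrite (eq_bigr (fun D : {set 'I_n} => (#|D| == k) * (if odd (n - k) then 0 else 2 ^ k * 'C(n - k, (n - k)./2)))).
  rewrite -big_distrl /= (eq_bigr (fun D : {set 'I_n} => (D \in [set D : {set 'I_n} | #|D| == k] : nat))); last by move=> D _; rewrite inE.
  rewrite sum_indT card_draws card_ord.
  case: ifP => _; [by rewrite muln0 | by rewrite mulnA mulnAC].
move=> D _.
case: (eqVneq #|D| k) => HD; last first.
  by rewrite mul0n big1 // => G _; rewrite andbF.
rewrite [nat_of_bool true]/= mul1n.
case: ifP => Hodd.
  rewrite big1 // => G _; rewrite andbT.
  case: eqP => // E; exfalso; move: Hodd.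
  have -> : n - k = (#|G :\: D|).*2 by rewrite -muln2; lia.
  by rewrite odd_double.
have Hh := halfK (n - k); rewrite Hodd subn0 in Hh.
rewrite (eq_bigr (fun G => (G \in [set G : {set 'I_n} | #|G :\: D| == (n - k)./2] : nat))).
  rewrite sum_indT splitcount HD.
  have HC : #|~: D| = n - k by have := cardsC D; rewrite HD card_ord; lia.
  by rewrite HC.
move=> G _; rewrite inE HD andbT.
congr nat_of_bool; apply/eqP/eqP; rewrite -!muln2 in Hh *; lia.
Qed.

End S.

Theorem mainTheorem7 (n k : nat) : k <= n ->
  (~~ odd (n - k) ->
     #|[set w : (n.*2).-tuple bool | balanced w && (da w == k)]|
       = 'C(n, k) * 'C(n - k, (n - k)./2) * 2 ^ k)
  /\ (odd (n - k) ->
     #|[set w : (n.*2).-tuple bool | balanced w && (da w == k)]| = 0).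
Proof.
move=> Hk.
have E : #|[set w : (n.*2).-tuple bool | balanced w && (da w == k)]| =
  #|[set p : {set 'I_n} * {set 'I_n} | (#|p.2| + 2 * #|p.1 :\: p.2| == n) && (#|p.2| == k)]|.
  rewrite -(card_imset _ (can_inj (@psiK n))) (can2_imset_pre _ (@psiK n) (@phiK n)).
  by apply: eq_card => p; rewrite !inE balancedE daE phiK.
rewrite E countPairs //; split => [/negbTE -> // | -> //].
Qed.
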